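(* Let $(\Gamma,d)$ be as in the context, with shells $S_m$ and shadows $O(g)$. There exist $R,\Delta\ge0$ depending only on $(\Gamma,d)$ such that for all $n$ and all $r>n+\Delta$, for every $g\in S_r$, every $\xi\in O(g)$ and every $h\in S_n$, \[|\beta_\xi(h,e)-\beta_g(h,e)|\le R.\]
   Context: $\Gamma$ is a finitely generated group acting properly cocompactly by isometries on a proper quasiruled hyperbolic space $(X,d)$ with basepoint $x_0$, and $d(g,h)=d(g.x_0,h.x_0)$ makes $(\Gamma,d)$ a proper quasiruled hyperbolic space (points joined by $(\lambda,c)$-quasigeodesics which are $\tau$-quasirulers, i.e. $(z(s)|z(u))_{z(t)}\le\tau$ for $s<t<u$ with Gromov product $(x|y)_w=\frac12(d(x,w)+d(y,w)-d(x,y))$; quasitriangles uniformly thin). $\partial\Gamma$ is the visual boundary. For $z\in\Gamma$, $\beta_z(x,y)=d(z,x)-d(z,y)$; for $\xi\in\partial\Gamma$, $\beta_\xi(x,y)=\sup\limsup_{t\to\infty}(d(z(t),x)-d(z(t),y))$ over quasiruler rays $z$ from $y$ to $\xi$. $B_m=\{g:d(g,e)\le m\}$, $S_m=B_m\setminus B_{m-k}$ for a fixed $k$, and $O(g)=O_C(e,g)$ is the set of $\xi\in\partial\Gamma$ such that some quasiruler ray from $e$ to $\xi$ meets the closed $C$-ball about $g$, for a fixed constant $C\ge0$. *)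

(* Defs.v *)
From Stdlib Require Import Reals Lra List.
From Coquelicot Require Import Coquelicot.
Open Scope R_scope.

Section Geometry.
Variable T : Type.
Variable d : T -> T -> R.

Definition gprod (x y w : T) : R := (d x w + d y w - d x y) / 2.

Definition is_metric : Prop :=
  (forall x y, 0 <= d x y) /\ (forall x, d x x = 0) /\
  (forall x y, d x y = 0 -> x = y) /\
  (forall x y, d x y = d y x) /\ (forall x y z, d x z <= d x y + d y z).

Definition is_proper_space : Prop :=
  forall (x0 : T) (r : R) (u : nat -> T), (forall n, d (u n) x0 <= r) ->
    exists (phi : nat -> nat) (l : T),
      (forall n, (phi n < phi (S n))%nat) /\ d l x0 <= r /\
      is_lim_seq (fun n => d (u (phi n)) l) 0.

Definition quasigeodesic_on (lam c : R) (D : R -> Prop) (z : R -> T) : Prop :=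
  forall s t, D s -> D t ->
    Rabs (s - t) / lam - c <= d (z s) (z t) <= lam * Rabs (s - t) + c.

Definition quasiruler_on (tau : R) (D : R -> Prop) (z : R -> T) : Prop :=
  forall s t u, D s -> D t -> D u -> s < t -> t < u ->
    gprod (z s) (z u) (z t) <= tau.

Definition seg (L : R) : R -> Prop := fun t => 0 <= t <= L.
Definition halfline : R -> Prop := fun t => 0 <= t.

Definition qg_path (lam c : R) (x y : T) (L : R) (z : R -> T) : Prop :=
  0 <= L /\ z 0 = x /\ z L = y /\ quasigeodesic_on lam c (seg L) z.

Definition qr_path (lam c tau : R) (x y : T) (L : R) (z : R -> T) : Prop :=
  qg_path lam c x y L z /\ quasiruler_on tau (seg L) z.

Definition thin_quasitriangles (lam c delta : R) : Prop :=
  forall x y w L1 L2 L3 z1 z2 z3,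
    qg_path lam c x y L1 z1 -> qg_path lam c y w L2 z2 ->
    qg_path lam c w x L3 z3 ->
    forall s, 0 <= s <= L1 ->
      (exists t, 0 <= t <= L2 /\ d (z1 s) (z2 t) <= delta) \/
      (exists t, 0 <= t <= L3 /\ d (z1 s) (z3 t) <= delta).

Definition quasiruled_hyperbolic (lam c tau delta : R) : Prop :=
  1 <= lam /\ 0 <= c /\ 0 <= tau /\ 0 <= delta /\
  (forall x y, exists L z, qr_path lam c tau x y L z) /\
  thin_quasitriangles lam c delta.

Definition qr_ray (lam c tau : R) (z : R -> T) : Prop :=
  quasigeodesic_on lam c halfline z /\ quasiruler_on tau halfline z.

Definition rays_asymptotic (z w : R -> T) : Prop :=
  exists D, (forall s, 0 <= s -> exists t, 0 <= t /\ d (z s) (w t) <= D) /\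
            (forall t, 0 <= t -> exists s, 0 <= s /\ d (z s) (w t) <= D).

(** Visual boundary: a boundary point is an asymptoticity class of
    quasiruler rays (represented as a predicate on rays). *)
Definition boundary_point (lam c tau : R) (xi : (R -> T) -> Prop) : Prop :=
  (exists z, xi z) /\
  (forall z, xi z -> qr_ray lam c tau z) /\
  (forall z w, xi z -> qr_ray lam c tau w -> (xi w <-> rays_asymptotic z w)).

Definition ray_to (lam c tau : R) (y : T) (xi : (R -> T) -> Prop) (z : R -> T)
  : Prop := qr_ray lam c tau z /\ z 0 = y /\ xi z.

Definition limsup_infty (f : R -> R) : Rbar :=
  Glb_Rbar (fun M => exists T0 : R,
    Finite M = Lub_Rbar (fun v => exists t, T0 <= t /\ v = f t)).

Definition beta_pt (z x y : T) : R := d z x - d z y.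

Definition beta_bd (lam c tau : R) (xi : (R -> T) -> Prop) (x y : T) : Rbar :=
  Lub_Rbar (fun v => exists z, ray_to lam c tau y xi z /\
      Finite v = limsup_infty (fun t => d (z t) x - d (z t) y)).

Definition shell (e : T) (k m : R) (g : T) : Prop :=
  d g e <= m /\ ~ (d g e <= m - k).

Definition shadow (lam c tau : R) (C : R) (e g : T) (xi : (R -> T) -> Prop)
  : Prop :=
  exists z, ray_to lam c tau e xi z /\ exists t, 0 <= t /\ d (z t) g <= C.

End Geometry.

Definition is_group {G : Type} (mul : G -> G -> G) (inv : G -> G) (e : G)
  : Prop :=
  (forall a b c, mul a (mul b c) = mul (mul a b) c) /\
  (forall a, mul e a = a /\ mul a e = a) /\
  (forall a, mul (inv a) a = e /\ mul a (inv a) = e).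

Inductive generated_by {G : Type} (mul : G -> G -> G) (inv : G -> G) (e : G)
  (S : list G) : G -> Prop :=
| gen_e : generated_by mul inv e S e
| gen_r : forall g s, generated_by mul inv e S g -> In s S ->
            generated_by mul inv e S (mul g s)
| gen_rinv : forall g s, generated_by mul inv e S g -> In s S ->
            generated_by mul inv e S (mul g (inv s)).

Definition finitely_generated {G : Type} (mul : G -> G -> G) (inv : G -> G)
  (e : G) : Prop :=
  exists S : list G, forall g, generated_by mul inv e S g.

Definition isometric_action {G X : Type} (mul : G -> G -> G) (e : G)
  (dX : X -> X -> R) (act : G -> X -> X) : Prop :=
  (forall x, act e x = x) /\
  (forall g h x, act (mul g h) x = act g (act h x)) /\
  (forall g x y, dX (act g x) (act g y) = dX x y).

Definition proper_action {G X : Type} (dX : X -> X -> R) (act : G -> X -> X)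
  : Prop :=
  forall x r, exists l : list G, forall g, dX (act g x) x <= r -> In g l.

Definition cocompact_action {G X : Type} (dX : X -> X -> R) (act : G -> X -> X)
  : Prop :=
  exists D, forall x y : X, exists g, dX x (act g y) <= D.

(* Main.v *)
Require Import Defs.
From Stdlib Require Import Reals Lra.
From Coquelicot Require Import Coquelicot.
Open Scope R_scope.

Section Lims.
Variable f : R -> R.
Let E T0 := fun v => exists t, T0 <= t /\ v = f t.

Lemma ls_le (T1 A : R) : (forall t, T1 <= t -> f t <= A) ->
  Rbar_le (limsup_infty f) (Finite A).
Proof.
  intros H. unfold limsup_infty.
  destruct (Lub_Rbar_correct (fun v => exists t, T1 <= t /\ v = f t)) as [Hub Hlub].
  assert (H1 : Rbar_le (Finite (f T1)) (Lub_Rbar (fun v => exists t, T1 <= t /\ v = f t))).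
  { apply Hub. exists T1; split; [lra|reflexivity]. }
  assert (H2 : Rbar_le (Lub_Rbar (fun v => exists t, T1 <= t /\ v = f t)) (Finite A)).
  { apply Hlub. intros x [t [Ht ->]]. simpl. apply H; exact Ht. }
  destruct (Lub_Rbar (fun v => exists t, T1 <= t /\ v = f t)) as [a| |] eqn:Ha;
    simpl in H1, H2; try contradiction.
  destruct (Glb_Rbar_correct (fun M => exists T0 : R,
    Finite M = Lub_Rbar (fun v => exists t, T0 <= t /\ v = f t))) as [Hlb _].
  eapply Rbar_le_trans. apply Hlb. exists T1. rewrite Ha. reflexivity.
  simpl. exact H2.
Qed.

Lemma ls_ge (T1 B : R) : (forall t, T1 <= t -> B <= f t) ->
  Rbar_le (Finite B) (limsup_infty f).
Proof.
  intros H. unfold limsup_infty.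
  destruct (Glb_Rbar_correct (fun M => exists T0 : R,
    Finite M = Lub_Rbar (fun v => exists t, T0 <= t /\ v = f t))) as [_ Hglb].
  apply Hglb. intros x [T0 HT0]. simpl.
  destruct (Lub_Rbar_correct (fun v => exists t, T0 <= t /\ v = f t)) as [Hub _].
  assert (H1 : Rbar_le (Finite (f (Rmax T0 T1))) (Finite x)).
  { rewrite HT0. apply Hub. exists (Rmax T0 T1); split; [apply Rmax_l|reflexivity]. }
  simpl in H1. pose proof (H (Rmax T0 T1) (Rmax_r _ _)). lra.
Qed.

Lemma ls_fin M : (forall t, - M <= f t <= M) -> exists v, limsup_infty f = Finite v.
Proof.
  intros H.
  pose proof (ls_le 0 M (fun t _ => proj2 (H t))) as H1.
  pose proof (ls_ge 0 (-M) (fun t _ => proj1 (H t))) as H2.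
  destruct (limsup_infty f) as [v| |]; simpl in *; try contradiction. eauto.
Qed.
End Lims.

Section Geo.
Variables (T : Type) (d : T -> T -> R).
Hypothesis dpos : forall x y, 0 <= d x y.
Hypothesis d0 : forall x, d x x = 0.
Hypothesis dsym : forall x y, d x y = d y x.
Hypothesis dtri : forall x y z, d x z <= d x y + d y z.

Lemma qr_mid lam c tau x y L z : 0 <= tau -> qr_path T d lam c tau x y L z ->
  forall t, 0 <= t <= L -> d x (z t) + d (z t) y <= d x y + 2 * tau.
Proof.
  intros Htau [[HL [Hz0 [HzL Hq]]] Hr] t Ht.
  destruct (Req_dec t 0) as [->|H0]. rewrite Hz0, d0; lra.
  destruct (Req_dec t L) as [->|H1]. rewrite HzL, d0; lra.
  assert (Hg := Hr 0 t L ltac:(unfold seg; lra) ltac:(unfold seg; lra)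
     ltac:(unfold seg; lra) ltac:(lra) ltac:(lra)).
  unfold gprod in Hg. rewrite Hz0, HzL in Hg. rewrite (dsym (z t) y). lra.
Qed.

Lemma ray_mid lam c tau z : 0 <= tau -> qr_ray T d lam c tau z ->
  forall s t, 0 <= s <= t -> d (z 0) (z s) + d (z s) (z t) <= d (z 0) (z t) + 2 * tau.
Proof.
  intros Htau [Hq Hr] s t Hs.
  destruct (Req_dec s 0) as [->|H0]. rewrite d0; lra.
  destruct (Req_dec s t) as [->|H1]. rewrite d0; lra.
  assert (Hg := Hr 0 s t ltac:(unfold halfline; lra) ltac:(unfold halfline; lra)
     ltac:(unfold halfline; lra) ltac:(lra) ltac:(lra)).
  unfold gprod in Hg. rewrite (dsym (z s) (z t)). lra.
Qed.

Lemma ray_seg lam c tau z L : qr_ray T d lam c tau z -> 0 <= L ->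
  qg_path T d lam c (z 0) (z L) L z.
Proof.
  intros [Hq _] HL. split; [exact HL|split; [reflexivity|split; [reflexivity|]]].
  intros s t Hs Ht. apply Hq; unfold seg, halfline in *; lra.
Qed.

Lemma ray_rev lam c tau z S : qr_ray T d lam c tau z -> 0 <= S ->
  qg_path T d lam c (z S) (z 0) S (fun t => z (S - t)).
Proof.
  intros [Hq _] HS. split; [exact HS|split; [|split]].
  - rewrite Rminus_0_r; reflexivity.
  - rewrite Rminus_diag; reflexivity.
  - intros s t Hs Ht. unfold seg in *.
    replace (Rabs (s - t)) with (Rabs ((S - s) - (S - t))).
    apply Hq; unfold halfline; lra.
    rewrite Rabs_minus_sym. f_equal. ring.
Qed.
End Geo.

Lemma core (T : Type) (d : T -> T -> R)
  (dpos : forall x y, 0 <= d x y) (d0 : forall x, d x x = 0)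
  (dsym : forall x y, d x y = d y x) (dtri : forall x y z, d x z <= d x y + d y z)
  lam c tau delta k C (e : T) :
  quasiruled_hyperbolic T d lam c tau delta -> 0 < k -> 0 <= C ->
  forall n r : R, r > n + (k + C + 2 * tau + delta + 1) ->
  forall g xi h, shell T d e k r g -> boundary_point T d lam c tau xi ->
  shadow T d lam c tau C e g xi -> shell T d e k n h ->
  Rbar_le (Rbar_abs (Rbar_minus (beta_bd T d lam c tau xi h e)
                                    (Finite (beta_pt T d g h e))))
              (Finite (2 * delta + 2 * tau + 2 * C)).
Proof.
  intros Hqh Hk HC n r Hnr g xi h [Hg1 Hg2] Hbp Hsh [Hh1 Hh2].
  apply Rnot_le_lt in Hg2.
  destruct Hqh as (Hlam & Hc & Htau & Hdel & Hpaths & Hthin).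
  destruct Hsh as (z & [Hzr [Hz0 Hxiz]] & t0 & Ht0 & Hzt0).
  unfold beta_pt.
  set (b := d g h - d g e).
  set (R0 := 2 * delta + 2 * tau + 2 * C).
  assert (Hbnd : forall w : R -> T, forall t, - d h e <= d (w t) h - d (w t) e <= d h e).
  { intros w t. pose proof (dtri (w t) e h). pose proof (dtri (w t) h e).
    pose proof (dsym h e). lra. }
  assert (PA : forall T1, t0 <= T1 -> b - R0 <= d (z T1) h - d (z T1) e).
  { intros T1 HT1.
    destruct (Hpaths (z T1) h) as (L2 & z2 & Hz2).
    destruct (Hpaths h e) as (L3 & z3 & Hz3).
    assert (Hseg := ray_seg T d lam c tau z T1 Hzr ltac:(lra)). rewrite Hz0 in Hseg.
    destruct (Hthin e (z T1) h T1 L2 L3 z z2 z3 Hseg (proj1 Hz2) (proj1 Hz3) t0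
      ltac:(lra)) as [[t [Ht Hd]] | [t [Ht Hd]]].
    - pose proof (qr_mid T d d0 dsym lam c tau _ _ _ _ Htau Hz2 t Ht) as Hm.
      pose proof (dtri (z T1) (z2 t) (z t0)). pose proof (dtri (z t0) (z2 t) h).
      pose proof (dtri (z T1) (z t0) e). pose proof (dtri g (z t0) h).
      pose proof (dtri (z t0) g e).
      pose proof (dsym (z2 t) (z t0)). pose proof (dsym (z T1) (z t0)).
      pose proof (dsym g (z t0)). unfold b, R0. lra.
    - pose proof (qr_mid T d d0 dsym lam c tau _ _ _ _ Htau Hz3 t Ht) as Hm.
      pose proof (dpos h (z3 t)).
      pose proof (dtri (z t0) (z3 t) e). pose proof (dtri g (z t0) e).
      pose proof (dsym (z3 t) e). pose proof (dsym g (z t0)). lra. }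
  assert (PB : forall w, ray_to T d lam c tau e xi w ->
     exists s0, forall t, s0 <= t -> d (w t) h - d (w t) e <= b + R0).
  { intros w [Hwr [Hw0 Hxiw]].
    destruct Hbp as (_ & _ & Hcls).
    destruct (proj1 (Hcls z w Hxiz Hwr) Hxiw) as (D & HD1 & _).
    assert (HD : 0 <= D).
    { destruct (HD1 0 ltac:(lra)) as (t & _ & Ht). pose proof (dpos (z 0) (w t)). lra. }
    set (K := delta + D + 2 * tau + c + 1).
    set (TT := t0 + lam * K).
    assert (HlK : 0 <= lam * K) by (apply Rmult_le_pos; unfold K; lra).
    destruct (HD1 TT ltac:(unfold TT; lra)) as (S & HS & HdS).
    destruct (Hpaths (z TT) (w S)) as (L2 & z2 & Hz2).
    assert (Hseg := ray_seg T d lam c tau z TT Hzr ltac:(unfold TT; lra)). rewrite Hz0 in Hseg.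
    assert (Hrev := ray_rev T d lam c tau w S Hwr HS). rewrite Hw0 in Hrev.
    destruct (Hthin e (z TT) (w S) TT L2 S z z2 _ Hseg (proj1 Hz2) Hrev t0
      ltac:(unfold TT; lra)) as [[t [Ht Hd]] | [t [Ht Hd]]].
    - exfalso.
      pose proof (qr_mid T d d0 dsym lam c tau _ _ _ _ Htau Hz2 t Ht) as Hm.
      pose proof (dpos (z2 t) (w S)).
      destruct Hzr as [Hq _].
      pose proof (Hq t0 TT ltac:(unfold halfline; lra) ltac:(unfold halfline; unfold TT; lra)) as Hqg.
      rewrite Rabs_minus_sym, Rabs_right in Hqg by (unfold TT; lra).
      replace ((TT - t0) / lam) with K in Hqg by (unfold TT; field; lra).
      pose proof (dtri (z t0) (z2 t) (z TT)). pose proof (dsym (z2 t) (z TT)).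
      unfold K in Hqg. lra.
    - cbv beta in Hd. exists (S - t). intros t1 Ht1.
      pose proof (ray_mid T d d0 dsym lam c tau w Htau Hwr (S - t) t1 ltac:(lra)) as Hm.
      rewrite Hw0 in Hm.
      set (q := w (S - t)) in *.
      pose proof (dtri (w t1) q h). pose proof (dtri q (z t0) h). pose proof (dtri (z t0) g h).
      pose proof (dtri g (z t0) e). pose proof (dtri (z t0) q e).
      pose proof (dsym (w t1) q). pose proof (dsym q (z t0)). pose proof (dsym e q). pose proof (dsym (w t1) e).
      pose proof (dsym g (z t0)).
      unfold b, R0. lra. }
  destruct (ls_fin (fun t => d (z t) h - d (z t) e) (d h e) (Hbnd z)) as (v0 & Hv0).
  assert (Hv0b : b - R0 <= v0).
  { pose proof (ls_ge (fun t => d (z t) h - d (z t) e) t0 (b - R0) PA) as H.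
    rewrite Hv0 in H. exact H. }
  unfold beta_bd.
  destruct (Lub_Rbar_correct (fun v => exists z0, ray_to T d lam c tau e xi z0 /\
      Finite v = limsup_infty (fun t => d (z0 t) h - d (z0 t) e))) as [Hub Hlub].
  assert (H1 := Hub v0 (ex_intro _ z (conj (conj Hzr (conj Hz0 Hxiz)) (eq_sym Hv0)))).
  assert (H2 : Rbar_le (Lub_Rbar (fun v => exists z0, ray_to T d lam c tau e xi z0 /\
      Finite v = limsup_infty (fun t => d (z0 t) h - d (z0 t) e))) (Finite (b + R0))).
  { apply Hlub. intros x [w [Hw Hx]].
    destruct (PB w Hw) as [s0 Hs0].
    pose proof (ls_le (fun t => d (w t) h - d (w t) e) s0 (b + R0) Hs0) as H.
    rewrite <- Hx in H. exact H. }
  destruct (Lub_Rbar _) as [l| |]; simpl in H1, H2; try contradiction.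
  simpl. apply Rabs_le. fold b. lra.
Qed.
Theorem mainTheorem9
  (G : Type) (mul : G -> G -> G) (inv : G -> G) (e : G)
  (X : Type) (dX : X -> X -> R) (act : G -> X -> X) (x0 : X)
  (lam c tau delta k C : R) :
  is_group mul inv e ->
  finitely_generated mul inv e ->
  is_metric X dX ->
  is_proper_space X dX ->
  (exists lamX cX tauX deltaX,
      quasiruled_hyperbolic X dX lamX cX tauX deltaX) ->
  isometric_action mul e dX act ->
  proper_action dX act ->
  cocompact_action dX act ->
  (* (G,d) with d(g,h) = dX(g.x0, h.x0) is quasiruled hyperbolic with the
     fixed constants lam, c, tau (used for quasiruler rays / the boundary) *)
  quasiruled_hyperbolic G (fun g h => dX (act g x0) (act h x0))
    lam c tau delta ->
  0 < k -> 0 <= C ->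
  exists R0 Delta : R, 0 <= R0 /\ 0 <= Delta /\
    forall (n r : nat), INR r > INR n + Delta ->
    forall (g : G) (xi : (R -> G) -> Prop) (h : G),
      let d := fun a b => dX (act a x0) (act b x0) in
      shell G d e k (INR r) g ->
      boundary_point G d lam c tau xi ->
      shadow G d lam c tau C e g xi ->
      shell G d e k (INR n) h ->
      Rbar_le (Rbar_abs (Rbar_minus (beta_bd G d lam c tau xi h e)
                                    (Finite (beta_pt G d g h e))))
              (Finite R0).
Proof.
  intros Hgrp Hfg Hmet Hprop HX Hact Hpa Hcc Hqh Hk HC.
  destruct Hmet as (Hpos & H0 & _ & Hsym & Htri).
  exists (2 * delta + 2 * tau + 2 * C), (k + C + 2 * tau + delta + 1).
  destruct Hqh as (Hlam & Hc & Htau & Hdel & Hr).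
  split; [lra|split; [lra|]].
  intros n r Hnr g xi h d Hg Hbp Hsh Hh.
  apply (core G d (fun x y => Hpos _ _) (fun x => H0 _) (fun x y => Hsym _ _)
    (fun x y z => Htri _ _ _) lam c tau delta k C e
    (conj Hlam (conj Hc (conj Htau (conj Hdel Hr)))) Hk HC (INR n) (INR r) Hnr
    g xi h Hg Hbp Hsh Hh).
Qed.
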